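(* Let $1\le k\le n$, let $\mathcal{G}_{k-1}$ be a nearest-neighbor graph of a storage network with node set $\mathcal{N}$ and RTT function $\tau$, and let $\mathcal{H}$ be its extended graph. An uncoded storage scheme admissible on $\mathcal{G}_{k-1}$ exists if and only if the chromatic number of $\mathcal{H}$ satisfies $\chi(\mathcal{H})=k$.
   Context: A storage network consists of $n$ nodes $\mathcal{N}=\{1,\dots,n\}$ and a round-trip-time (RTT) function $\tau:\mathcal{N}\times\mathcal{N}\to\mathbb{R}_{\ge 0}$, symmetric with $\tau(i,i)=0$, and $k\le n$ information files $W_1,\dots,W_k$. An uncoded storage scheme stores at each node $i$ one file $X_i=W_{\sigma(i)}$ for a map $\sigma:\mathcal{N}\to[k]$. For node $i$, $\lambda_0^{(i)}\le\dots\le\lambda_{n-1}^{(i)}$ is the sorted list of $\{\tau(j,i):j\in\mathcal{N}\}$. A nearest-neighbor graph $\mathcal{G}_{k-1}$ is a directed graph on $\mathcal{N}$ in which each node $i$ has incoming edges from exactly $k-1$ other nodes whose RTTs to $i$ are the $k-1$ smallest values $\lambda_1^{(i)},\dots,\lambda_{k-1}^{(i)}$ (ties broken arbitrarily); these $k-1$ nodes are called the neighbors of $i$ (a node reached only by an outgoing edge of $i$ is not a neighbor of $i$). An uncoded scheme is admissible on $\mathcal{G}_{k-1}$ if for every node $i$ and every $j\in[k]$, some node in $\{i\}\cup\{\text{neighbors of } i\}$ stores $W_j$. The extended graph $\mathcal{H}$ of $\mathcal{G}_{k-1}$ is the undirected graph on $\mathcal{N}$ in which two distinct nodes are adjacent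 iff they are joined by a directed edge (in either direction) in $\mathcal{G}_{k-1}$, or they are both neighbors of a common node in $\mathcal{G}_{k-1}$. *)

(* Defs.v *)
From HB Require Import structures.
From mathcomp Require Import all_boot all_order all_algebra.
Set Implicit Arguments. Unset Strict Implicit. Unset Printing Implicit Defensive.
Import Order.TTheory GRing.Theory Num.Theory.
Local Open Scope ring_scope.

Definition rtt_function (R : realFieldType) (n : nat) (tau : 'I_n -> 'I_n -> R) :=
  (forall i j, tau i j = tau j i) /\ (forall i, tau i i = 0) /\
  (forall i j, 0 <= tau i j).

(* nb i = set of neighbors of i (the k-1 nodes with edges into i).
   nb is a nearest-neighbor graph G_{k-1}: each i has exactly k-1 neighbors,
   all distinct from i, whose RTTs to i are the k-1 smallest values
   lambda_1^(i),...,lambda_{k-1}^(i), i.e. no non-neighbor (other than i)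
   is strictly closer to i than some neighbor. *)
Definition nn_graph (R : realFieldType) (n k : nat) (tau : 'I_n -> 'I_n -> R)
    (nb : 'I_n -> {set 'I_n}) :=
  forall i : 'I_n,
    [/\ i \notin nb i, #|nb i| = k.-1 &
        forall j l, j \in nb i -> l \notin nb i -> l != i -> tau j i <= tau l i].

Definition admissible (n k : nat) (nb : 'I_n -> {set 'I_n}) (sigma : 'I_n -> 'I_k) :=
  forall (i : 'I_n) (j : 'I_k), exists2 m, m \in i |: nb i & sigma m = j.

Definition ext_adj (n : nat) (nb : 'I_n -> {set 'I_n}) : rel 'I_n :=
  fun x y => (x != y) &&
    [|| x \in nb y, y \in nb x | [exists z, (x \in nb z) && (y \in nb z)]].

Definition colorable (n : nat) (e : rel 'I_n) (c : nat) : bool :=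
  [exists f : {ffun 'I_n -> 'I_c}, [forall x, forall y, e x y ==> (f x != f y)]].

Lemma colorable_n (n : nat) (e : rel 'I_n) : irreflexive e -> colorable e n.
Proof.
move=> irr; apply/existsP; exists [ffun x => x]; apply/forallP=> x; apply/forallP=> y.
apply/implyP=> exy; rewrite !ffunE; apply/eqP=> xy; by rewrite xy irr in exy.
Qed.

Lemma ext_adj_irr (n : nat) (nb : 'I_n -> {set 'I_n}) : irreflexive (ext_adj nb).
Proof. by move=> x; rewrite /ext_adj eqxx. Qed.

Definition chromatic_number (n : nat) (e : rel 'I_n) (irr : irreflexive e) : nat :=
  ex_minn (ex_intro (fun c => colorable e c) n (colorable_n irr)).

Definition chi_ext (n : nat) (nb : 'I_n -> {set 'I_n}) : nat :=
  chromatic_number (@ext_adj_irr n nb).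

(* Main.v *)
Require Import Defs.
From mathcomp Require Import all_boot all_order all_algebra.

Set Implicit Arguments.
Section Aux.
Variables (n k : nat) (nb : 'I_n -> {set 'I_n}).
Hypothesis Hnb : forall i, i \notin nb i /\ #|nb i| = k.-1.
Hypothesis Hk : (1 <= k)%N.

Lemma cardS i : #|i |: nb i| = k.
Proof.
have [Hi Hc] := Hnb i.
by rewrite cardsU1 Hi Hc /=; case: k Hk.
Qed.

Lemma clique i x y : x \in i |: nb i -> y \in i |: nb i -> x != y -> ext_adj nb x y.
Proof.
rewrite /ext_adj !inE => hx hy nxy; rewrite nxy /=.
case/orP: hx => [/eqP ex|hx]; case/orP: hy => [/eqP ey|hy].
- by rewrite ex ey eqxx in nxy.
- by rewrite ex hy orbT.
- by rewrite ey hx.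
- by apply/orP; right; apply/orP; right; apply/existsP; exists i; rewrite hx hy.
Qed.

Lemma proper_inj c (f : 'I_n -> 'I_c) i :
  (forall x y, ext_adj nb x y -> f x != f y) -> {in i |: nb i &, injective f}.
Proof.
move=> Pf x y hx hy fxy; apply/eqP; apply/negP=> /negP nxy.
by move: (Pf _ _ (clique hx hy nxy)); rewrite fxy eqxx.
Qed.

Lemma proper_ge c (f : 'I_n -> 'I_c) (i : 'I_n) :
  (forall x y, ext_adj nb x y -> f x != f y) -> (k <= c)%N.
Proof.
move=> Pf; rewrite -(cardS i) -(card_in_imset (proper_inj (i:=i) f Pf)).
by apply: leq_trans (max_card _) _; rewrite card_ord.
Qed.

Lemma proper_adm (f : 'I_n -> 'I_k) :
  (forall x y, ext_adj nb x y -> f x != f y) -> admissible nb f.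
Proof.
move=> Pf i j.
have E : f @: (i |: nb i) = setT.
  apply/eqP; rewrite eqEcard subsetT cardsT card_ord.
  by rewrite (card_in_imset (proper_inj (i:=i) f Pf)) cardS leqnn.
have : j \in f @: (i |: nb i) by rewrite E inE.
by case/imsetP=> m hm ->; exists m.
Qed.

Lemma adm_proper (f : 'I_n -> 'I_k) :
  admissible nb f -> forall x y, ext_adj nb x y -> f x != f y.
Proof.
move=> A.
have inj : forall i, {in i |: nb i &, injective f}.
  move=> i; apply/imset_injP; rewrite (cardS).
  have -> : f @: (i |: nb i) = setT.
    apply/setP=> j; rewrite inE; have [m hm <-] := A i j.
    by apply/imsetP; exists m.
  by rewrite cardsT card_ord.
move=> x y /andP[nxy H].
have [z [hx hy]] : exists z, x \in z |: nb z /\ y \in z |: nb z.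
  case/or3P: H => [h|h|/existsP[z /andP[h1 h2]]].
  - by exists y; rewrite !inE eqxx h orbT.
  - by exists x; rewrite !inE eqxx h orbT.
  - by exists z; rewrite !inE h1 h2 !orbT.
by apply: contra nxy => /eqP fe; apply/eqP; apply: (inj z).
Qed.

End Aux.

Lemma colP n (e : rel 'I_n) c :
  reflect (exists f : 'I_n -> 'I_c, forall x y, e x y -> f x != f y) (colorable e c).
Proof.
apply: (iffP existsP) => [[f /forallP Hf]|[f Hf]].
  exists f => x y exy; by move/forallP: (Hf x) => /(_ y) /implyP; apply.
exists [ffun x => f x]; apply/forallP=> x; apply/forallP=> y; apply/implyP=> exy.
by rewrite !ffunE Hf.
Qed.

Theorem theorem1 (R : realFieldType) (n k : nat) (tau : 'I_n -> 'I_n -> R)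
    (nb : 'I_n -> {set 'I_n}) :
  (1 <= k <= n)%N -> rtt_function tau -> nn_graph k tau nb ->
  (exists sigma : 'I_n -> 'I_k, admissible nb sigma) <-> chi_ext nb = k.
Proof.
move=> /andP[k1 kn] _ NN.
have Hnb : forall i, i \notin nb i /\ #|nb i| = k.-1.
  by move=> i; have [? ? _] := NN i.
have i0 : 'I_n by exists 0%N; apply: leq_trans kn.
rewrite /chi_ext /chromatic_number.
case: ex_minnP => c Hc Hmin.
have [g Hg] := elimT (colP _ _) Hc.
split.
- case=> sigma A.
  have Pc := adm_proper Hnb k1 A.
  have ck : (c <= k)%N by apply: Hmin; apply/existsP; exists [ffun x => sigma x];
    apply/forallP=> x; apply/forallP=> y; apply/implyP=> exy; rewrite !ffunE Pc.
  have kc : (k <= c)%N := proper_ge k nb Hnb k1 g i0 Hg.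
  by apply/eqP; rewrite eqn_leq ck kc.
- move=> ck; subst c; exists g; exact: (proper_adm nb Hnb k1 g Hg).
Qed.
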